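(* Let $P$ be a finite set of points in $\mathbb{R}^m$ and let $(A,B)$ be an optimal 2-means partition of $P$ with $|A|\ge|B|$. Then at least $\frac{4}{7}|A|$ points of $A$ are high-revenue points (with respect to the split $P\to(A,B)$). Consequently $rev(A,B)\ge\frac{1}{35}|A||B|$.
   Context: Distances are Euclidean: $d(x,y)=\|x-y\|_2$. For finite nonempty $S$, $\rho(S)=\frac{1}{|S|}\sum_{u\in S}u$ and $\Delta_1(S)=\sum_{u\in S}d(u,\rho(S))^2$. A partition $(A,B)$ of $P$ into two nonempty sets is an optimal 2-means partition if it minimizes $\Delta_1(A)+\Delta_1(B)$ among all partitions of $P$ into two nonempty sets. For $i\in A$, $j\in B$, $rev(i,j)=\min\{d(i,j)/\max\{d(i,\rho(A)),d(j,\rho(B))\},\,1\}$ (equal to $1$ if the maximum is $0$), and $rev(A,B)=\sum_{i\in A}\sum_{j\in B}rev(i,j)$. For $u\in A$, the high-revenue set is $HR_B(u)=\{v\in B: rev(u,v)\ge\frac{1}{10}\}$ and the low-revenue set is $LR_B(u)=B\setminus HR_B(u)$. A point $u\in A$ is a high-revenue point if $|HR_B(u)|\ge\frac12|B|$, and a low-revenue point otherwise. *)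

(* Defs.v *)
(* Points of R^m are row vectors 'rV[R]_m over an abstract
   R : realType (the statement is then stated for every model of the reals,
   including Stdlib's R).  The finite point set P is given as the image of an
   injective map p : 'I_n -> 'rV[R]_m; subsets of P are {set 'I_n}. *)
From HB Require Import structures.
From mathcomp Require Import all_boot all_order all_algebra.
From mathcomp Require Import reals.
Set Implicit Arguments. Unset Strict Implicit. Unset Printing Implicit Defensive.
Import Order.TTheory GRing.Theory Num.Theory.
Local Open Scope ring_scope.

Section KMeans.
Variables (R : realType) (m n : nat) (p : 'I_n -> 'rV[R]_m).

Definition edist (x y : 'rV[R]_m) : R :=
  Num.sqrt (\sum_(k < m) (x 0 k - y 0 k) ^+ 2).

Definition centroid (S : {set 'I_n}) : 'rV[R]_m :=
  (#|S|%:R)^-1 *: \sum_(u in S) p u.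

Definition Delta1 (S : {set 'I_n}) : R :=
  \sum_(u in S) edist (p u) (centroid S) ^+ 2.

Definition optimal_2means (A : {set 'I_n}) : Prop :=
  [/\ A != set0, ~: A != set0 &
      forall A' : {set 'I_n}, A' != set0 -> ~: A' != set0 ->
        Delta1 A + Delta1 (~: A) <= Delta1 A' + Delta1 (~: A')].

Definition revij (A B : {set 'I_n}) (i j : 'I_n) : R :=
  let M := Num.max (edist (p i) (centroid A)) (edist (p j) (centroid B)) in
  if M == 0 then 1 else Num.min (edist (p i) (p j) / M) 1.

Definition revAB (A B : {set 'I_n}) : R :=
  \sum_(i in A) \sum_(j in B) revij A B i j.

Definition HR (A B : {set 'I_n}) (u : 'I_n) : {set 'I_n} :=
  [set v in B | 10%:R^-1 <= revij A B u v].

Definition high_revenue (A B : {set 'I_n}) (u : 'I_n) : bool :=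
  (#|B|%:R / 2%:R <= (#|HR A B u|%:R : R)).

End KMeans.

(* Main.v *)
Require Import Defs.
From HB Require Import structures.
From mathcomp Require Import all_boot all_order all_algebra.
From mathcomp Require Import reals.
From mathcomp Require Import ring lra.
Import Order.TTheory GRing.Theory Num.Theory.
Local Open Scope ring_scope.

Section Aux.
Variables (R : realType) (m n : nat) (p : 'I_n -> 'rV[R]_m).

Definition dd (x y : 'rV[R]_m) : R := \sum_(k < m) (x 0 k - y 0 k) ^+ 2.

Lemma dd_ge0 (x y : 'rV[R]_m) : 0 <= dd x y.
Proof. by apply: sumr_ge0 => k _; exact: sqr_ge0. Qed.

Lemma dd_sym (x y : 'rV[R]_m) : dd x y = dd y x.
Proof. by apply: eq_bigr => k _; rewrite -sqrrN opprB. Qed.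

Lemma dd_xx (x : 'rV[R]_m) : dd x x = 0.
Proof. by apply: big1 => k _; rewrite subrr expr0n. Qed.

Lemma edistE (x y : 'rV[R]_m) : edist x y = Num.sqrt (dd x y).
Proof. by []. Qed.

Lemma edist2 (x y : 'rV[R]_m) : edist x y ^+ 2 = dd x y.
Proof. by rewrite edistE sqr_sqrtr // dd_ge0. Qed.

Lemma edist_ge0 (x y : 'rV[R]_m) : 0 <= edist x y.
Proof. exact: sqrtr_ge0. Qed.

Lemma edist_sym (x y : 'rV[R]_m) : edist x y = edist y x.
Proof. by rewrite !edistE dd_sym. Qed.

Lemma sumsq0 (f : 'I_m -> R) : \sum_k f k ^+ 2 = 0 -> forall k, f k = 0.
Proof.
move=> /eqP; rewrite psumr_eq0 => [/allP hz k|k _]; last exact: sqr_ge0.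
by have := hz k (mem_index_enum k); rewrite /= sqrf_eq0 => /eqP.
Qed.

Lemma cs (f g : 'I_m -> R) :
  \sum_k f k * g k <= Num.sqrt (\sum_k f k ^+ 2) * Num.sqrt (\sum_k g k ^+ 2).
Proof.
set A := \sum_k f k ^+ 2; set B := \sum_k g k ^+ 2; set S := \sum_k f k * g k.
have A0 : 0 <= A by apply: sumr_ge0 => k _; exact: sqr_ge0.
have B0 : 0 <= B by apply: sumr_ge0 => k _; exact: sqr_ge0.
set a := Num.sqrt A; set b := Num.sqrt B.
have a0 : 0 <= a by exact: sqrtr_ge0.
have b0 : 0 <= b by exact: sqrtr_ge0.
have aA : a ^+ 2 = A by rewrite sqr_sqrtr.
have bB : b ^+ 2 = B by rewrite sqr_sqrtr.
have H : 0 <= \sum_k (f k * b - g k * a) ^+ 2 by apply: sumr_ge0 => k _; exact: sqr_ge0.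
have E : \sum_k (f k * b - g k * a) ^+ 2 = A * b ^+ 2 + B * a ^+ 2 - 2 * a * b * S.
  transitivity (\sum_k (f k ^+ 2 * b ^+ 2 + g k ^+ 2 * a ^+ 2 - 2 * a * b * (f k * g k))).
    by apply: eq_bigr => k _; ring.
  by rewrite sumrB big_split /= -!mulr_suml -mulr_sumr.
rewrite E aA bB in H.
have [ab0|abp] := eqVneq (a * b) 0.
  have : A = 0 \/ B = 0.
    move/eqP: ab0; rewrite mulf_eq0 => /orP [] /eqP h; [left|right].
      by rewrite -aA h expr0n.
    by rewrite -bB h expr0n.
  move=> hAB; rewrite ab0 le_eqVlt; apply/orP; left; apply/eqP.
  rewrite /S; apply: big1 => k _.
  case: hAB => h0.
    by rewrite (@sumsq0 f h0) mul0r.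
  by rewrite (@sumsq0 g h0) mulr0.
have abpos : 0 < a * b by rewrite lt_def abp mulr_ge0.
rewrite -aA -bB in H.
have : (a * b) * S <= (a * b) * (a * b) by nra.
by rewrite ler_pM2l.
Qed.

Lemma edist_tri (x y z : 'rV[R]_m) : edist x z <= edist x y + edist y z.
Proof.
rewrite -(ler_pXn2r (n:=2)) //; last first.
  by rewrite nnegrE addr_ge0 // edist_ge0.
  by rewrite nnegrE edist_ge0.
rewrite edist2 sqrrD !edist2.
have := cs (fun k => x 0 k - y 0 k) (fun k => y 0 k - z 0 k).
rewrite -/(dd x y) -/(dd y z) -!edistE => hcs.
have -> : dd x z = dd x y + dd y z + 2 * \sum_k (x 0 k - y 0 k) * (y 0 k - z 0 k).
  rewrite /dd mulr_sumr -!big_split /=; apply: eq_bigr => k _; ring.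
lra.
Qed.


Lemma centroidE (S : {set 'I_n}) k :
  (centroid p S) 0 k = #|S|%:R^-1 * \sum_(u in S) p u 0 k.
Proof. by rewrite /centroid mxE summxE. Qed.

Lemma Delta1E (S : {set 'I_n}) : Delta1 p S = \sum_(u in S) dd (p u) (centroid p S).
Proof. by apply: eq_bigr => u _; rewrite edist2. Qed.

Lemma sum_tr (S : {set 'I_n}) (f : 'I_n -> R) :
  \sum_(v in S) f v = #|S|%:R * (#|S|%:R^-1 * \sum_(v in S) f v).
Proof.
have [/eqP|] := eqVneq #|S| 0%N.
  by rewrite cards_eq0 => /eqP ->; rewrite big_set0 !mulr0.
by move=> h; rewrite mulrA mulfV ?mul1r // pnatr_eq0.
Qed.

Lemma par_scal (S : {set 'I_n}) (f : 'I_n -> R) (z : R) :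
  \sum_(u in S) (f u - z) ^+ 2 =
  \sum_(u in S) (f u - #|S|%:R^-1 * \sum_(v in S) f v) ^+ 2
  + #|S|%:R * (#|S|%:R^-1 * \sum_(v in S) f v - z) ^+ 2.
Proof.
have hF := sum_tr S f.
move: hF; set t := #|S|%:R; set F := \sum_(v in S) f v; set r := t^-1 * F => hF.
transitivity (\sum_(u in S) ((f u - r) ^+ 2 + (2 * (r - z) * f u + (- (2 * (r - z) * r) + (r - z) ^+ 2)))).
  by apply: eq_bigr => u _; ring.
rewrite !big_split /= -mulr_sumr !sumr_const -/F hF -/t.
rewrite -[_ *+ #|S|]mulr_natr -[(r - z) ^+ 2 *+ _]mulr_natr -/t.
ring.
Qed.

Lemma par_vec (S : {set 'I_n}) z :
  \sum_(u in S) dd (p u) z =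
  \sum_(u in S) dd (p u) (centroid p S) + #|S|%:R * dd (centroid p S) z.
Proof.
rewrite /dd exchange_big [X in X + _]exchange_big mulr_sumr -big_split /=.
apply: eq_bigr => k _; rewrite centroidE; exact: par_scal.
Qed.


Definition mincost (X : {set 'I_n}) := forall X' : {set 'I_n}, X' != set0 -> ~: X' != set0 ->
  Delta1 p X + Delta1 p (~: X) <= Delta1 p X' + Delta1 p (~: X').

Lemma group_move (X T : {set 'I_n}) : mincost X -> T \subset X -> T != set0 ->
  X :\: T != set0 ->
  \sum_(u in T) dd (p u) (centroid p X)
  + #|X :\: T|%:R * dd (centroid p (X :\: T)) (centroid p X)
  <= \sum_(u in T) dd (p u) (centroid p (~: X)).
Proof.
move=> hmin hTX hT hXT.
have hC : ~: (X :\: T) != set0.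
  case/set0Pn: hT => t ht; apply/set0Pn; exists t.
  by rewrite !inE ht.
have h := hmin _ hXT hC.
have e1 : Delta1 p X = \sum_(u in T) dd (p u) (centroid p X)
   + (Delta1 p (X :\: T) + #|X :\: T|%:R * dd (centroid p (X :\: T)) (centroid p X)).
  have eXT : X :&: T = T by apply/setIidPr.
  rewrite Delta1E (big_setID T) /=. idtac. rewrite eXT. by rewrite Delta1E (par_vec (X :\: T) (centroid p X)).
have e2 : ~: (X :\: T) :&: T = T.
  apply/setP => i; rewrite !inE; case: (boolP (i \in T)) => //=; by rewrite andbF.
have e3 : ~: (X :\: T) :\: T = ~: X.
  apply/setP => i; rewrite !inE; case: (boolP (i \in T)) => //= hi.
  by rewrite (subsetP hTX i hi).
have e4 : Delta1 p (~: (X :\: T)) <= Delta1 p (~: X) + \sum_(u in T) dd (p u) (centroid p (~: X)).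
  have := par_vec (~: (X :\: T)) (centroid p (~: X)).
  rewrite (big_setID T) /= e2 e3 -Delta1E -Delta1E => e.
  have : 0 <= #|~: (X :\: T)|%:R * dd (centroid p (~: (X :\: T))) (centroid p (~: X)).
    by rewrite mulr_ge0 // dd_ge0.
  lra.
lra.
Qed.

Lemma centroid1 (u : 'I_n) : centroid p [set u] = p u.
Proof. by rewrite /centroid big_set1 cards1 invr1 scale1r. Qed.

Lemma single_move (X : {set 'I_n}) u : mincost X -> u \in X ->
  dd (p u) (centroid p X) <= dd (p u) (centroid p (~: X)).
Proof.
move=> hmin hu.
have [hX|hX] := eqVneq X [set u].
  by rewrite hX centroid1 dd_xx dd_ge0.
have hXT : X :\: [set u] != set0.
  apply: contra hX; rewrite setD_eq0 => hs; rewrite eqEsubset hs sub1set hu.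
  by [].
have hT : [set u] != set0 by apply/set0Pn; exists u; rewrite inE.
have hs : [set u] \subset X by rewrite sub1set.
have := @group_move X [set u] hmin hs hT hXT.
rewrite !big_set1 => h.
have : 0 <= #|X :\: [set u]|%:R * dd (centroid p (X :\: [set u])) (centroid p X).
  by rewrite mulr_ge0 // dd_ge0.
lra.
Qed.


Lemma key_real (r s e r' w : R) : 0 <= r -> 0 <= s -> 0 <= e -> r <= r' -> s <= w ->
  w <= e + r -> r' <= e + s -> e < Num.max r s / 10%:R ->
  e < r / 9%:R /\ r' <= 11%:R / 9%:R * r.
Proof.
move=> r0 s0 e0 rr' sw we rs; rewrite maxEle; case: ifP => h; lra.
Qed.

Lemma revij_low (A B : {set 'I_n}) u v : ~~ (10%:R^-1 <= revij p A B u v) ->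
  edist (p u) (p v) < Num.max (edist (p u) (centroid p A)) (edist (p v) (centroid p B)) / 10%:R.
Proof.
rewrite /revij; set M := Num.max _ _.
have M0 : 0 <= M by rewrite le_max edist_ge0.
have t1 : (10%:R : R)^-1 <= 1 by rewrite invf_le1 ?ltr0n // ler1n.
case: eqP => hM.
  by rewrite t1.
rewrite -ltNge gt_min => /orP [h|h]; last by exfalso; lra.
have Mp : 0 < M by rewrite lt_def M0 andbT; apply/eqP.
move: h; rewrite ltr_pdivrMr // => h.
by rewrite ltr_pdivlMr //; lra.
Qed.

Lemma revij_ge0 (A B : {set 'I_n}) u v : 0 <= revij p A B u v.
Proof.
rewrite /revij; set M := Num.max _ _.
have M0 : 0 <= M by rewrite le_max edist_ge0.
case: eqP => hM //; rewrite le_min ler01 andbT.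
by rewrite divr_ge0 // edist_ge0.
Qed.


Lemma low_pair (A : {set 'I_n}) u v : mincost A -> mincost (~: A) -> u \in A -> v \in ~: A ->
  ~~ (10%:R^-1 <= revij p A (~: A) u v) ->
  edist (p u) (p v) < edist (p u) (centroid p A) / 9%:R /\
  edist (p u) (centroid p (~: A)) <= 11%:R / 9%:R * edist (p u) (centroid p A).
Proof.
move=> hA hB uA vB hl.
apply: (@key_real _ (edist (p v) (centroid p (~: A))) _ _ (edist (p v) (centroid p A)));
  try exact: edist_ge0.
- by rewrite !edistE; apply: ler_wsqrtr; exact: (@single_move A u hA uA).
- have := @single_move (~: A) v hB vB; rewrite setCK => h; rewrite !edistE; exact: ler_wsqrtr h.
- by rewrite (edist_sym (p u)); exact: edist_tri.
- exact: edist_tri.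
- exact: revij_low.
Qed.

Definition lowp (A : {set 'I_n}) u :=
  (u \in A) && ((#|HR p A (~: A) u|%:R : R) < #|~: A|%:R / 2%:R).

Lemma common (A : {set 'I_n}) u u' : lowp A u -> lowp A u' ->
  exists v, [/\ v \in ~: A, ~~ (10%:R^-1 <= revij p A (~: A) u v)
                & ~~ (10%:R^-1 <= revij p A (~: A) u' v)].
Proof.
pose L := fun w => ~: A :\: HR p A (~: A) w.
have cardL w : lowp A w -> #|~: A|%:R / 2%:R < (#|L w|%:R : R).
  move=> /andP [_ h].
  have e : (#|HR p A (~: A) w| + #|L w|)%N = #|~: A|.
    have <- : ~: A :&: HR p A (~: A) w = HR p A (~: A) w.
      by apply/setIidPr; apply/subsetP => x; rewrite inE => /andP [].
    exact: cardsID.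
  move/(congr1 (fun k => k%:R : R)): e; rewrite natrD; lra.
move=> hu hu'.
have hU : (#|L u :|: L u'| <= #|~: A|)%N.
  by apply: subset_leq_card; rewrite subUset !subsetDl.
have e := cardsUI (L u) (L u').
have e' : (#|L u :|: L u'|%:R + #|L u :&: L u'|%:R : R) = #|L u|%:R + #|L u'|%:R.
  by rewrite -!natrD e.
have hU' : (#|L u :|: L u'|%:R : R) <= #|~: A|%:R by rewrite ler_nat.
have := cardL _ hu; have := cardL _ hu' => c1 c2.
have : (0 : R) < #|L u :&: L u'|%:R by lra.
rewrite ltr0n card_gt0 => /set0Pn [v].
rewrite !inE => /andP [/andP [h1 h2] /andP [h3 h4]].
exists v; split.
- by rewrite inE.
- by move: h1; rewrite h2.
- by move: h3; rewrite h2.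
Qed.


Lemma self_bound (A : {set 'I_n}) u : mincost A -> mincost (~: A) -> lowp A u ->
  0 < dd (p u) (centroid p A) /\
  dd (p u) (centroid p (~: A)) <= 121%:R / 81%:R * dd (p u) (centroid p A).
Proof.
move=> hA hB hu.
have [v [vB h1 _]] := @common A u u hu hu.
have uA : u \in A by case/andP: hu.
have [e1 e2] := @low_pair A u v hA hB uA vB h1.
have e0 := edist_ge0 (p u) (p v).
have r0 := edist_ge0 (p u) (centroid p (~: A)).
rewrite -!edist2; move: e1 e2 e0 r0.
set r := edist (p u) (centroid p A); set r' := edist (p u) (centroid p (~: A)).
set e := edist (p u) (p v) => e1 e2 e0 r0.
have rp : 0 < r by lra.
split; first by rewrite expr2 mulr_gt0.
have : r' ^+ 2 <= (11%:R / 9%:R * r) ^+ 2 by rewrite ler_pXn2r // nnegrE; lra.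
move=> h; apply: (le_trans h); rewrite exprMn; lra.
Qed.

Lemma pair_bound (A : {set 'I_n}) u u' : mincost A -> mincost (~: A) -> lowp A u -> lowp A u' ->
  dd (p u) (p u') <= 2%:R / 81%:R * (dd (p u) (centroid p A) + dd (p u') (centroid p A)).
Proof.
move=> hA hB hu hu'.
have [v [vB h1 h2]] := @common A u u' hu hu'.
have uA : u \in A by case/andP: hu.
have uA' : u' \in A by case/andP: hu'.
have [e1 _] := @low_pair A u v hA hB uA vB h1.
have [e2 _] := @low_pair A u' v hA hB uA' vB h2.
have ee1 := edist_ge0 (p u) (p v).
have ee2 := edist_ge0 (p u') (p v).
have d0 := edist_ge0 (p u) (p u').
have tri := edist_tri (p u) (p v) (p u').
rewrite (edist_sym (p v)) in tri.
rewrite -!edist2; move: e1 e2 ee1 ee2 d0 tri.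
set r := edist (p u) (centroid p A); set r' := edist (p u') (centroid p A).
set d := edist (p u) (p u'); set e := edist (p u) (p v); set e' := edist (p u') (p v).
move=> e1 e2 ee1 ee2 d0 tri.
have h1' : d <= (r + r') / 9%:R by lra.
have : d ^+ 2 <= ((r + r') / 9%:R) ^+ 2 by rewrite ler_pXn2r // nnegrE; lra.
move=> h; apply: (le_trans h).
have : 0 <= (r - r') ^+ 2 by exact: sqr_ge0.
rewrite expr_div_n; lra.
Qed.


Lemma var_bound (A S : {set 'I_n}) : mincost A -> mincost (~: A) ->
  (forall u, u \in S -> lowp A u) ->
  \sum_(u in S) dd (p u) (centroid p S) <= 2%:R / 81%:R * \sum_(u in S) dd (p u) (centroid p A).
Proof.
move=> hA hB hS.
set V := \sum_(u in S) dd (p u) (centroid p S).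
set X := \sum_(u in S) dd (p u) (centroid p A).
set c := (2%:R / 81%:R : R).
set t := (#|S|%:R : R).
have E : \sum_(u' in S) \sum_(u in S) dd (p u) (p u') = 2%:R * t * V.
  transitivity (\sum_(u' in S) (V + t * dd (centroid p S) (p u'))).
    by apply: eq_bigr => u' _; exact: par_vec.
  rewrite big_split /= sumr_const -mulr_sumr.
  under eq_bigr => u' _ do rewrite dd_sym.
  rewrite -/V -mulr_natr -/t; ring.
have L : \sum_(u' in S) \sum_(u in S) dd (p u) (p u') <=
         \sum_(u' in S) \sum_(u in S) c * (dd (p u) (centroid p A) + dd (p u') (centroid p A)).
  apply: ler_sum => u' hu'; apply: ler_sum => u hu.
  exact: pair_bound hA hB (hS u hu) (hS u' hu').
have E2 : \sum_(u' in S) \sum_(u in S) c * (dd (p u) (centroid p A) + dd (p u') (centroid p A))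
          = c * (2%:R * t * X).
  transitivity (\sum_(u' in S) (c * X + t * c * dd (p u') (centroid p A))).
    apply: eq_bigr => u' _.
    rewrite -mulr_sumr big_split /= sumr_const -/X -mulr_natr -/t; ring.
  rewrite big_split /= sumr_const -mulr_sumr -/X -mulr_natr -/t; ring.
rewrite E E2 in L.
have [t0|tp] := eqVneq t 0.
  have : S = set0 by apply/eqP; rewrite -cards_eq0 -(eqr_nat R) -/t t0.
  by rewrite /V /X => ->; rewrite !big_set0 mulr0.
have tpos : 0 < t by rewrite lt_def tp ler0n.
have : (2%:R * t) * V <= (2%:R * t) * (c * X) by move: L; rewrite mulrA; lra.
by rewrite ler_pM2l // mulr_gt0 // ltr0n.
Qed.


Lemma shift_id (A S : {set 'I_n}) : S \subset A -> S != set0 -> A :\: S != set0 ->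
  #|A :\: S|%:R * dd (centroid p (A :\: S)) (centroid p A)
  = (#|S|%:R ^+ 2 / #|A :\: S|%:R) * dd (centroid p S) (centroid p A).
Proof.
move=> hSA hS hAS.
have eAS : A :&: S = S by apply/setIidPr.
have hA : #|A| = (#|S| + #|A :\: S|)%N by rewrite -{1}eAS cardsID.
have tp : (0 : R) < #|S|%:R by rewrite ltr0n card_gt0.
have ap : (0 : R) < #|A :\: S|%:R by rewrite ltr0n card_gt0.
rewrite /dd !mulr_sumr; apply: eq_bigr => k _.
rewrite !centroidE [\sum_(u in A) _](big_setID S) /= eAS hA natrD.
move: tp ap; set t := (#|S|%:R : R); set al := (#|A :\: S|%:R : R).
set q := \sum_(u in S) p u 0 k; set s := \sum_(u in A :\: S) p u 0 k => tp ap.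
have t0 : t != 0 by rewrite gt_eqF.
have a0 : al != 0 by rewrite gt_eqF.
have ta0 : t + al != 0 by rewrite gt_eqF // addr_gt0.
field.
by rewrite a0 ta0 t0.
Qed.


Lemma low_count (A S : {set 'I_n}) : mincost A -> mincost (~: A) -> S \subset A ->
  (forall u, u \in S -> lowp A u) -> 7%:R * (#|S|%:R : R) <= 3%:R * #|A|%:R.
Proof.
move=> hA hB hSA hS.
have [->|hS0] := eqVneq S set0.
  by rewrite cards0 mulr0 mulr_ge0 // ler0n.
set X := \sum_(u in S) dd (p u) (centroid p A).
set Y := \sum_(u in S) dd (p u) (centroid p (~: A)).
set V := \sum_(u in S) dd (p u) (centroid p S).
set W := dd (centroid p S) (centroid p A).
set t := (#|S|%:R : R).
have hX : 0 < X.
  case/set0Pn: hS0 => u0 hu0.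
  rewrite /X (big_setD1 u0) //=.
  have [h _] := @self_bound A u0 hA hB (hS u0 hu0).
  have : 0 <= \sum_(i in S :\ u0) dd (p i) (centroid p A) by apply: sumr_ge0 => i _; exact: dd_ge0.
  lra.
have hY : Y <= 121%:R / 81%:R * X.
  rewrite /X mulr_sumr; apply: ler_sum => u hu.
  by have [_ h] := @self_bound A u hA hB (hS u hu).
have hV : V <= 2%:R / 81%:R * X := @var_bound A S hA hB hS.
have eX : X = V + t * W by exact: par_vec.
have W0 : 0 <= W by exact: dd_ge0.
have tp : 0 < t by rewrite ltr0n card_gt0.
have [hSA'|hAS] := eqVneq S A.
  exfalso; move: eX; rewrite /W hSA' dd_xx mulr0 addr0 => eX.
  lra.
have hAS0 : A :\: S != set0.
  apply: contra hAS; rewrite setD_eq0 => h; rewrite eqEsubset hSA h.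
  by [].
have G := @group_move A S hA hSA hS0 hAS0.
rewrite shift_id // -/X -/Y -/t -/W in G.
have eA : #|A| = (#|S| + #|A :\: S|)%N.
  have eAS : A :&: S = S by apply/setIidPr.
  by rewrite -{1}eAS cardsID.
rewrite eA natrD -/t.
move: G; set al := (#|A :\: S|%:R : R) => G.
have ap : 0 < al by rewrite ltr0n card_gt0.
set k := t / al.
have k0 : 0 <= k by rewrite divr_ge0 // ltW.
have e1 : t ^+ 2 / al * W = k * (t * W) by rewrite /k; field; rewrite gt_eqF.
rewrite e1 in G.
have h1 : k * (79%:R / 81%:R * X) <= k * (t * W) by rewrite ler_wpM2l //; lra.
have h3 : (k * 79%:R) * X <= 40%:R * X by nra.
have h4 : k * 79%:R <= 40%:R by rewrite -(ler_pM2r hX).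
have et : t = k * al by rewrite /k; field; rewrite gt_eqF.
have : 79%:R * t <= 40%:R * al by rewrite et; nra.
lra.
Qed.

End Aux.

Theorem mainTheorem3 (R : realType) (m n : nat) (p : 'I_n -> 'rV[R]_m)
  (p_inj : injective p) (A : {set 'I_n}) :
  optimal_2means p A -> (#|~: A| <= #|A|)%N ->
  (4%:R / 7%:R) * #|A|%:R <= (#|[set u in A | high_revenue p A (~: A) u]|%:R : R)
  /\ (35%:R)^-1 * #|A|%:R * #|~: A|%:R <= revAB p A (~: A).
Proof.
move=> [hA0 hB0 hmin] hcard.
have hA : @mincost R m n p A := hmin.
have hB : @mincost R m n p (~: A).
  by move=> X' h1 h2; rewrite setCK addrC; exact: hmin.
set H := [set u in A | high_revenue p A (~: A) u].
set S := A :\: H.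
have hSA : S \subset A := subsetDl A H.
have hS : forall u, u \in S -> @lowp R m n p A u.
  move=> u; rewrite !inE => /andP [hn uA].
  rewrite /lowp uA /=; move: hn; rewrite uA /= /high_revenue -ltNge.
  by [].
have hc := @low_count R m n p A S hA hB hSA hS.
have eAH : A :&: H = H by apply/setIidPr; apply/subsetP => x; rewrite inE => /andP [].
have eA : #|A| = (#|H| + #|S|)%N by rewrite -{1}eAH cardsID.
have h1 : (4%:R / 7%:R) * #|A|%:R <= (#|H|%:R : R).
  move: hc; rewrite eA natrD; lra.
split; first exact: h1.
have rev_H : \sum_(i in H) \sum_(j in ~: A) revij p A (~: A) i j <= revAB p A (~: A).
  rewrite /revAB [X in _ <= X](big_setID H) /= eAH.
  have : 0 <= \sum_(i in A :\: H) \sum_(j in ~: A) revij p A (~: A) i j.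
    by apply: sumr_ge0 => i _; apply: sumr_ge0 => j _; exact: (@revij_ge0 R m n p).
  lra.
have each : forall i, i \in H -> #|~: A|%:R / 20%:R <= \sum_(j in ~: A) revij p A (~: A) i j.
  move=> i; rewrite inE => /andP [_ hi].
  move: hi; rewrite /high_revenue => hi.
  have eBH : ~: A :&: HR p A (~: A) i = HR p A (~: A) i.
    by apply/setIidPr; apply/subsetP => x; rewrite inE => /andP [].
  rewrite (big_setID (HR p A (~: A) i)) /= eBH.
  have : 0 <= \sum_(j in ~: A :\: HR p A (~: A) i) revij p A (~: A) i j.
    by apply: sumr_ge0 => j _; exact: (@revij_ge0 R m n p).
  have : \sum_(j in HR p A (~: A) i) (10%:R^-1 : R) <= \sum_(j in HR p A (~: A) i) revij p A (~: A) i j.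
    by apply: ler_sum => j; rewrite inE => /andP [].
  rewrite sumr_const -mulr_natr.
  lra.
have : \sum_(i in H) (#|~: A|%:R / 20%:R : R) <= \sum_(i in H) \sum_(j in ~: A) revij p A (~: A) i j.
  exact: ler_sum.
rewrite sumr_const -mulr_natr => h2.
have : (4%:R / 7%:R * #|A|%:R) * #|~: A|%:R <= (#|H|%:R : R) * #|~: A|%:R.
  by rewrite ler_wpM2r // ler0n.
lra.
Qed.
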